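(* Let $\Omega\subset\mathbb{R}^2$ be open and bounded, and let $G\in C^\infty(\bar\Omega,\mathbb{R}^{2\times2})$ be symmetric positive definite with $A=\sqrt G$. Assume $\min\mathcal{E}=0$, i.e. there is a smooth $u:\Omega\to\mathbb{R}^2$ with $(\nabla u)^T\nabla u=G$ and $\det\nabla u>0$ in $\Omega$. Then for this $u$, $$\mathcal{F}_1(u):=\int_\Omega QW(\nabla u(x)\lambda(x))\,dx=0,\qquad \lambda(x)=\mathrm{diag}\{|A(x)e_1|^{-1},|A(x)e_2|^{-1}\}.$$
   Context: $\mathcal{E}(u)=\int_\Omega\overline W(\nabla u\,A^{-1})\,dx$, where $\overline W:\mathbb{R}^{2\times2}\to[0,\infty]$ satisfies $\overline W(RF)=\overline W(F)$, $\overline W(R)=0$ and $\overline W(F)\ge c\,\mathrm{dist}^2(F,SO(2))$ for all $F$, $R\in SO(2)$, some $c>0$; so $\mathcal{E}(u)=0$ iff $\nabla u\in SO(2)A$ a.e. $W(M)=\sum_{j=1}^2(|Me_j|-1)^2$ and $QW$ is its quasiconvex envelope. *)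

(* Defs.v *)
From HB Require Import structures.
From mathcomp Require Import all_boot all_order all_algebra.
From mathcomp Require Import all_classical all_reals all_analysis.
Set Implicit Arguments. Unset Strict Implicit. Unset Printing Implicit Defensive.
Import Order.TTheory GRing.Theory Num.Theory.
Import numFieldNormedType.Exports.
Local Open Scope classical_set_scope.
Local Open Scope ring_scope.

Section Defs.
Variable R : realType.

Definition coord2 (p : R * R) (i : 'I_2) : R := if val i == 0%N then p.1 else p.2.
Definition ebasis (j : 'I_2) : R * R := if val j == 0%N then (1, 0) else (0, 1).

(* Jacobian matrix: (grad u x) i j = d u_i / d x_j (x). *)
Definition grad (u : R * R -> R * R) (x : R * R) : 'M[R]_2 :=
  \matrix_(i < 2, j < 2) coord2 ('D_(ebasis j) u x) i.

Fixpoint Dseq (V : normedModType R) (f : R * R -> V) (vs : seq (R * R)) : R * R -> V :=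
  if vs is v :: vs' then fun x => 'D_v (Dseq f vs') x else f.

Definition smooth_on (V : normedModType R) (O : set (R * R)) (f : R * R -> V) : Prop :=
  forall vs : seq (R * R),
    (forall x v, O x -> derivable (Dseq f vs) x v) /\
    {in O, continuous (Dseq f vs)}.

Definition leb2 := ((@lebesgue_measure R) \x (@lebesgue_measure R))%E.

Definition unit_square : set (R * R) :=
  [set x | (0 < x.1 < 1) /\ (0 < x.2 < 1)].

Definition colnorm (M : 'M[R]_2) (j : 'I_2) : R :=
  Num.sqrt (M 0 j ^+ 2 + M 1 j ^+ 2).

Definition W (M : 'M[R]_2) : R := \sum_(j < 2) (colnorm M j - 1) ^+ 2.

Definition test_fun (phi : R * R -> R * R) : Prop :=
  smooth_on setT phi /\
  exists eps : R, 0 < eps /\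
    forall x, ~ ((eps <= x.1 <= 1 - eps) /\ (eps <= x.2 <= 1 - eps)) -> phi x = 0.

Definition quasiconvex (f : 'M[R]_2 -> R) : Prop :=
  continuous f /\
  forall (F : 'M[R]_2) (phi : R * R -> R * R), test_fun phi ->
    ((f F)%:E <= \int[leb2]_(x in unit_square) (f (F + grad phi x))%:E)%E.

Definition QW (M : 'M[R]_2) : R :=
  sup [set g M | g in [set g : 'M[R]_2 -> R | quasiconvex g /\ forall N, g N <= W N]].


Definition sym_pd (M : 'M[R]_2) : Prop :=
  M^T = M /\ forall v : 'cV[R]_2, v != 0 -> 0 < (v^T *m M *m v) 0 0.

(* uniform continuity on a set (for bounded O this is equivalent to
   continuous extendability to the closure of O) *)
Definition unif_cont_on (O : set (R * R)) (f : R * R -> R) : Prop :=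
  forall eps : R, 0 < eps -> exists2 delta : R, 0 < delta &
    (forall x y, O x -> O y -> `|x - y| < delta -> `|f x - f y| < eps).

Definition lambda (A : R * R -> 'M[R]_2) (x : R * R) : 'M[R]_2 :=
  diag_mx (\row_(j < 2) (colnorm (A x) j)^-1).

End Defs.

(* Main.v *)
Require Import Defs.
From HB Require Import structures.
From mathcomp Require Import all_boot all_order all_algebra.
From mathcomp Require Import all_classical all_reals all_analysis.
Import Order.TTheory GRing.Theory Num.Theory.
Import numFieldNormedType.Exports.
Local Open Scope classical_set_scope.
Local Open Scope ring_scope.

Lemma QW0 (R : realType) (M : 'M[R]_2) : W M = 0 -> QW M = 0.
Proof.
move=> WM; rewrite /QW.
have q0 : quasiconvex (fun _ : 'M[R]_2 => (0:R)).
  split; first exact: cst_continuous.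
  by move=> F phi _; rewrite integral0.
have ub : ubound [set g M | g in [set g : 'M[R]_2 -> R | quasiconvex g /\ forall N, g N <= W N]] 0.
  by move=> _ [g [_ gW] <-]; rewrite -WM.
have inS : [set g M | g in [set g : 'M[R]_2 -> R | quasiconvex g /\ forall N, g N <= W N]] 0.
  exists (fun _ => 0) => //; split => // N; rewrite /W sumr_ge0 // => i _; exact: sqr_ge0.
apply/le_anti/andP; split; first by apply: ge_sup => //; exists 0.
apply: sup_upper_bound => //; split; [by exists 0|by exists 0].
Qed.

Lemma colW (R : realType) (M Am : 'M[R]_2) :
  Am^T = Am -> M^T *m M = Am *m Am -> (forall j, 0 < Am j j) ->
  W (M *m diag_mx (\row_(j < 2) (colnorm Am j)^-1)) = 0.
Proof.
move=> hs hM hp.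
have sy : forall i k, Am i k = Am k i by move=> i k; rewrite -[in LHS]hs mxE.
have key : forall j, colnorm (M *m diag_mx (\row_(j < 2) (colnorm Am j)^-1)) j = 1.
  move=> j; rewrite /colnorm mul_mx_diag !mxE.
  have e : M 0 j ^+ 2 + M 1 j ^+ 2 = Am 0 j ^+ 2 + Am 1 j ^+ 2.
    have := congr1 (fun X : 'M[R]_2 => X j j) hM; rewrite !mxE !big_ord_recl big_ord0 !mxE /=.
    rewrite (sy j ord0) (sy j (lift ord0 ord0)) !addr0 => h.
    have e01 : lift ord0 ord0 = 1 :> 'I_2 by apply: val_inj.
    rewrite big_ord0 addr0 e01 in h; rewrite !expr2; exact: h.
  have s0 : 0 < Am 0 j ^+ 2 + Am 1 j ^+ 2.
    have := hp j; case: j {e} => [[|[|//]] Hj] /= H.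
    - have e0 : Ordinal Hj = 0 by apply: val_inj.
      rewrite e0 in H *.
      by apply: (lt_le_trans (exprn_gt0 2 H)); rewrite lerDl sqr_ge0.
    - have e0 : Ordinal Hj = 1 by apply: val_inj.
      rewrite e0 in H *.
      by apply: (lt_le_trans (exprn_gt0 2 H)); rewrite lerDr sqr_ge0.
  by rewrite !expr_div_n -mulrDl e sqr_sqrtr ?ltW // divff ?sqrtr1 // gt_eqF.
by rewrite /W big_ord_recl big_ord1 !key subrr expr0n /= addr0.
Qed.

Theorem lemma6p1 (R : realType) (Omega : set (R * R))
    (G A : R * R -> 'M[R]_2) (u : R * R -> R * R) :
  (* Omega open and bounded *)
  open Omega ->
  (exists r : R, forall x, Omega x -> `|x| <= r) ->
  (* G in C^infty(closure Omega), symmetric positive definite *)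
  (forall i j : 'I_2, smooth_on Omega (fun x => G x i j)) ->
  (forall (i j : 'I_2) (vs : seq (R * R)),
      unif_cont_on Omega (Dseq (fun x => G x i j) vs)) ->
  {within closure Omega, continuous G} ->
  (forall x, closure Omega x -> sym_pd (G x)) ->
  (* A = sqrt G *)
  (forall x, closure Omega x -> sym_pd (A x) /\ A x *m A x = G x) ->
  (* u smooth with (grad u)^T grad u = G and det grad u > 0 in Omega *)
  smooth_on Omega u ->
  (forall x, Omega x -> (grad u x)^T *m grad u x = G x /\ 0 < \det (grad u x)) ->
  (\int[@leb2 R]_(x in Omega) (QW (grad u x *m lambda A x))%:E = 0)%E.
Proof.
move=> _ _ _ _ _ _ hA _ hu.
rewrite (eq_integral (fun _ => 0%:E)); first by rewrite integral0.
move=> x; rewrite inE => Ox.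
have cx : closure Omega x by apply: subset_closure.
have [[hs hpd] hAG] := hA x cx.
have [hg _] := hu x Ox.
congr (_%:E); apply: QW0; apply: colW => //; first by rewrite hg hAG.
move=> j.
have v0 : (delta_mx j 0 : 'cV[R]_2) != 0.
  apply/eqP => /matrixP/(_ j 0); rewrite !mxE !eqxx => /eqP; by rewrite oner_eq0.
have := hpd _ v0.
by rewrite trmx_delta -rowE -colE !mxE.
Qed.
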